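(* (i) Let $\beta:\mathbb{Z}\to\mathbb{C}$ have convergent increments and let $d:\mathcal{A}\to A$ be the invariant derivation $d(a)=[\beta(\mathbb{K}),a]$. Then there exists an operator $D:\mathcal{D}\to\mathcal{H}$ such that $[D,\pi(a)]f=\pi(d(a))f$ and $U_\varphi DU_\varphi^{-1}f=Df$ for all $f\in\mathcal{D}$, $a\in\mathcal{A}$, $\varphi\in[0,2\pi)$. Moreover, every such $D$ has the form $Df=\beta(\mathbb{K})f-f\alpha(\mathbb{K})$ for some sequence $\alpha:\mathbb{Z}\to\mathbb{C}$. (ii) Let $\beta:\mathbb{Z}\to\mathbb{C}$ have convergent increments and let $d:\mathcal{A}\to A$ be the covariant derivation $d(a)=[U\beta(\mathbb{K}),a]$. Then there exists an operator $D:\mathcal{D}\to\mathcal{H}$ such that $[D,\pi(a)]f=\pi(d(a))f$ and $U_\varphi DU_\varphi^{-1}f=e^{i\varphi}Df$ for all $f\in\mathcal{D}$, $a\in\mathcal{A}$, $\varphi\in[0,2\pi)$. Moreover, every such $D$ has the form $Df=U\beta(\mathbb{K})f-fU\alpha(\mathbb{K})$ for some sequence $\alpha:\mathbb{Z}\to\mathbb{C}$.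
   Context: Let $\{E_k\}$ be the canonical basis of $\ell^2(\mathbb{Z})$, $UE_k=E_{k+1}$, $\mathbb{K}E_k=kE_k$, $a(\mathbb{K})E_k=a(k)E_k$. $A$ is the C$^*$-algebra generated by $U$ and all $a(\mathbb{K})$ with $a$ having finite limits at $\pm\infty$; $\mathcal{A}$ is the algebra of finite sums $\sum_nU^na_n(\mathbb{K})$ with each $a_n$ eventually constant (constant on $k\ge k_0$ and on $k\le-k_0$ for some $k_0$). A function $\beta$ has convergent increments if $k\mapsto\beta(k)-\beta(k-1)$ has finite limits as $k\to\pm\infty$. $\mathcal{H}$ is the Hilbert space of Hilbert–Schmidt operators on $\ell^2(\mathbb{Z})$ with $\langle f,g\rangle=\mathrm{tr}(f^*g)$, each $f$ uniquely $f=\sum_nU^nf_n(\mathbb{K})$ with $\sum_{n,k}|f_n(k)|^2<\infty$. $\mathcal{D}\subset\mathcal{H}$ is the dense subspace of finite sums with each $f_n$ finitely supported. $\pi(a)f=af$, $\pi'(a)f=fa$ for $a\in A$ (both preserve $\mathcal{D}$ for $a\in\mathcal{A}$). $U_\varphi f=\sum_ne^{in\varphi}U^nf_n(\mathbb{K})$ for $\varphi\in[0,2\pi)$. *)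

(* Defs.v *)
From mathcomp Require Import all_boot all_order all_algebra.
From mathcomp Require Import all_classical all_reals all_analysis.
From mathcomp Require Export complex.
Import Order.TTheory GRing.Theory Num.Theory.

Set Implicit Arguments.
Unset Strict Implicit.
Unset Printing Implicit Defensive.

Local Open Scope ring_scope.
Local Open Scope complex_scope.

Section Defs.
Variable R : realType.
Local Notation C := R[i].

(* An operator f = \sum_n U^n f_n(K) on l^2(Z) is encoded by its coefficient
   family: f n k = f_n(k), i.e. f E_k = \sum_n f_n(k) E_(k+n).  This
   representation is unique. *)
Definition coef := int -> int -> C.

Definition addc (f g : coef) : coef := fun n k => f n k + g n k.
Definition subc (f g : coef) : coef := fun n k => f n k - g n k.
Definition scalec (c : C) (f : coef) : coef := fun n k => c * f n k.

Definition cvgC (u : nat -> C) (l : C) : Prop :=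
  forall e : R, 0 < e -> exists N : nat, forall n : nat, (N <= n)%N ->
    ComplexField.Normc.normc (u n - l) < e.

Definition conv_incr (beta : int -> C) : Prop :=
  (exists l : C, cvgC (fun n : nat => beta n%:Z - beta (n%:Z - 1)) l) /\
  (exists l : C, cvgC (fun n : nat => beta (- n%:Z) - beta (- n%:Z - 1)) l).

Definition ev_const (a : int -> C) : Prop :=
  exists k0 : int, (forall k, k0 <= k -> a k = a k0) /\
                   (forall k, k <= - k0 -> a k = a (- k0)).

(* An element of the dense algebra \mathcal{A}: a finite sum
   \sum_{(n, a_n) in s} U^n a_n(K) with every a_n eventually constant. *)
Definition calA_elt := seq (int * (int -> C)).
Definition in_calA (s : calA_elt) : Prop :=
  forall i : nat, (i < size s)%N -> ev_const (nth (0, fun _ => 0) s i).2.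

(* (U^m c(K)) * f  and  f * (U^m c(K)), using a(K) U^n = U^n a(K+n). *)
Definition mon_l (m : int) (c : int -> C) (f : coef) : coef :=
  fun p k => c (k + p - m) * f (p - m) k.
Definition mon_r (f : coef) (m : int) (c : int -> C) : coef :=
  fun p k => f (p - m) (k + m) * c k.

(* pi(a) f = a f  for a in \mathcal{A} given as a finite sum. *)
Definition lmul (s : calA_elt) (f : coef) : coef :=
  fun p k => \sum_(t <- s) mon_l t.1 t.2 f p k.

Definition in_calD (f : coef) : Prop :=
  exists N : nat, forall n k : int,
    ((N < `|n|)%N \/ (N < `|k|)%N) -> f n k = 0.

(* Hilbert-Schmidt: \sum_{n,k} |f_n(k)|^2 < oo (bounded partial sums of a
   nonnegative family over Z x Z). *)
Definition in_calH (f : coef) : Prop :=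
  exists M : R, forall N : nat,
    \sum_(i < (2 * N).+1) \sum_(j < (2 * N).+1)
       ComplexField.Normc.normc (f (i%:Z - N%:Z) (j%:Z - N%:Z)) ^+ 2 <= M.

Definition expi (x : R) : C := cos x +i* sin x.

Definition Uphi (phi : R) (f : coef) : coef :=
  fun n k => expi (n%:~R * phi) * f n k.
Definition Uphi_inv (phi : R) (f : coef) : coef :=
  fun n k => expi (- (n%:~R * phi)) * f n k.

Definition operator_D_H (D : coef -> coef) : Prop :=
  (forall f, in_calD f -> in_calH (D f)) /\
  (forall f g, in_calD f -> in_calD g -> D (addc f g) = addc (D f) (D g)) /\
  (forall (c : C) f, in_calD f -> D (scalec c f) = scalec c (D f)).

(* [D, pi(a)] f = pi(d(a)) f  for all f in \mathcal{D}, a in \mathcal{A},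
   where d(a) = [X, a] with X = U^m beta(K) (m = 0: beta(K), m = 1: U beta(K));
   d(a) f = X (a f) - a (X f). *)
Definition implements_derivation (m : int) (beta : int -> C) (D : coef -> coef)
  : Prop :=
  forall s, in_calA s -> forall f, in_calD f ->
    subc (D (lmul s f)) (lmul s (D f)) =
    subc (mon_l m beta (lmul s f)) (lmul s (mon_l m beta f)).

Definition phi_covariant (m : int) (D : coef -> coef) : Prop :=
  forall phi : R, 0 <= phi -> phi < 2 * pi -> forall f, in_calD f ->
    Uphi phi (D (Uphi_inv phi f)) = scalec (expi (m%:~R * phi)) (D f).

Definition good_D (m : int) (beta : int -> C) (D : coef -> coef) : Prop :=
  operator_D_H D /\ implements_derivation m beta D /\ phi_covariant m D.

End Defs.

(* Main.v *)
Require Import Defs.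
From mathcomp Require Import all_boot all_order all_algebra.
From mathcomp Require Import all_classical all_reals all_analysis.
From mathcomp Require Import complex.
From mathcomp Require Import zify ring lra.
Import Order.TTheory GRing.Theory Num.Theory.
Local Open Scope ring_scope.
Local Open Scope complex_scope.

Section M.
Variable R : realType.
Local Notation C := R[i].

Lemma expiD (a b : R) : expi a * expi b = expi (a + b).
Proof.
rewrite /expi cosD sinD.
apply/eqP; rewrite eq_complex /=; apply/andP; split; apply/eqP; ring.
Qed.
Lemma expi0 : expi (0:R) = 1.
Proof. by rewrite /expi cos0 sin0. Qed.

Definition S1 (N : nat) (u : int -> R) := \sum_(i < (2 * N).+1) u (i%:Z - N%:Z).

Lemma S1S N u : S1 N.+1 u = u (- (N.+1)%:Z) + S1 N u + u (N.+1)%:Z.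
Proof.
rewrite /S1.
have -> : (2 * N.+1).+1 = ((2 * N).+1).+2 by lia.
rewrite big_ord_recr big_ord_recl /=.
congr (_ + _ + _).
- congr u; lia.
- apply: eq_bigr => i _; congr u; rewrite /bump /=; lia.
- congr u; lia.
Qed.

Lemma S1_mono u : (forall x, 0 <= u x) -> forall N d, S1 N u <= S1 (N + d) u.
Proof.
move=> u0 N; elim=> [|d IH]; first by rewrite addn0.
rewrite addnS S1S; apply: (le_trans IH).
rewrite -addrA addrC -addrA lerDl addr_ge0 //.
Qed.

Lemma S1_stab u K : (forall x, (K < `|x|)%N -> u x = 0) -> forall d, S1 (K + d) u = S1 K u.
Proof.
move=> uK; elim=> [|d IH]; first by rewrite addn0.
rewrite addnS S1S IH !uK ?add0r ?addr0 //; lia.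
Qed.

Lemma S1_le u K N : (forall x, 0 <= u x) -> (forall x, (K < `|x|)%N -> u x = 0) ->
  S1 N u <= S1 K u.
Proof.
move=> u0 uK; case: (leqP N K) => h.
  by rewrite -(subnKC h); apply: S1_mono.
by rewrite -(subnKC (ltnW h)) S1_stab.
Qed.

Lemma S1_ge0 u N : (forall x, 0 <= u x) -> 0 <= S1 N u.
Proof. by move=> u0; apply: sumr_ge0 => i _. Qed.

Lemma calD_calH (f : coef R) : in_calD f -> in_calH f.
Proof.
case=> K HK.
pose h a b := ComplexField.Normc.normc (f a b) ^+ 2.
have h0 a b : 0 <= h a b by rewrite /h sqr_ge0.
have hK a b : ((K < `|a|)%N \/ (K < `|b|)%N) -> h a b = 0.
  by move=> hh; rewrite /h HK // ComplexField.Normc.normc0 expr0n.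
exists (S1 K (fun a => S1 K (h a))) => N.
have -> : \sum_(i < (2 * N).+1) \sum_(j < (2 * N).+1)
   ComplexField.Normc.normc (f (i%:Z - N%:Z) (j%:Z - N%:Z)) ^+ 2 =
   S1 N (fun a => S1 N (h a)) by [].
apply: (@le_trans _ _ (S1 N (fun a => S1 K (h a)))).
  apply: ler_sum => i _; apply: S1_le => // x hx; apply: hK; by right.
apply: S1_le => [x|x hx]; first exact: S1_ge0.
by apply: big1 => i _; apply: hK; left.
Qed.
Lemma mon_l_calD m (beta : int -> C) f : in_calD f -> in_calD (mon_l m beta f).
Proof.
case=> N HN; exists (N + `|m|)%N => n k hk.
rewrite /mon_l HN ?mulr0 //; lia.
Qed.

Lemma good_exists m (beta : int -> C) : good_D m beta (mon_l m beta).
Proof.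
split; [split; [|split]|split].
- by move=> f hf; apply: calD_calH; apply: mon_l_calD.
- move=> f g _ _; apply/funext => n; apply/funext => k.
  by rewrite /mon_l /addc mulrDr.
- move=> c f _; apply/funext => n; apply/funext => k.
  by rewrite /mon_l /scalec mulrCA.
- by [].
- move=> phi _ _ f _; apply/funext => n; apply/funext => k.
  rewrite /Uphi /Uphi_inv /mon_l /= [beta _ * _]mulrCA !mulrA expiD.
  rewrite /Defs.scalec /= mulrA; congr (expi _ * _ * _); rewrite intrB; ring.
Qed.

Lemma phi_ok {d : int} : d != 0 -> 0 <= pi / `|d%:~R : R| /\ pi / `|d%:~R : R| < 2 * pi.
Proof.
move=> d0.
have h1 : 1 <= `|d%:~R : R| by rewrite -intr_norm ler1z; lia.
have hp : (0 : R) < pi := pi_gt0 R.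
split; first by rewrite divr_ge0 ?pi_ge0.
apply: (@le_lt_trans _ _ pi); last lra.
rewrite ler_pdivrMr; last lra.
nra.
Qed.

Lemma cos_d {d : int} : d != 0 -> cos (d%:~R * (pi / `|d%:~R : R|)) = -1 :> R.
Proof.
move=> d0; set x := d%:~R : R.
have x0 : x != 0 by rewrite /x intr_eq0.
case: (ltrgt0P x) => hx.
- by rewrite mulrCA divff // mulr1 cospi.
- by rewrite invrN !mulrN mulrCA divff // mulr1 cosN cospi.
- by move: x0; rewrite hx eqxx.
Qed.

Lemma expi_ne {p m : int} (phi : R) : cos ((p - m)%:~R * phi) = -1 ->
  expi (p%:~R * phi) != expi (m%:~R * phi).
Proof.
move=> hc; apply/negP => /eqP [hc' hs'].
move: hc; rewrite intrB mulrBl cosB hc' hs' -!expr2 cos2Dsin2 => h; lra.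
Qed.

Definition Pj (j : int) : coef R := fun n k => if (n == 0) && (k == j) then 1 else 0.
Definition chiN (N : nat) : coef R := fun n k => if (n == 0) && (`|k| <= N)%N then 1 else 0.
Definition delta (j : int) : int -> C := fun k => if k == j then 1 else 0.
Definition ind (N : nat) : int -> C := fun k => if (`|k| <= N)%N then 1 else 0.
Definition sf (N : nat) (f : coef R) : calA_elt R :=
  [seq (i%:Z - N%:Z, f (i%:Z - N%:Z)) | i <- iota 0 (2 * N).+1].
Definition Gof (D : coef R -> coef R) m beta (g : coef R) := Defs.subc (D g) (mon_l m beta g).

Lemma fs_evc (a : int -> C) (K : nat) : (forall k, (K < `|k|)%N -> a k = 0) -> ev_const a.
Proof. move=> ha; exists (K.+1)%:Z; split => k hk; rewrite !ha //; lia. Qed.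

Lemma calA1 n (a : int -> C) : ev_const a -> in_calA [:: (n, a)].
Proof. by move=> h [|i]. Qed.

Lemma calA_sf N (f : coef R) : (forall n k, (N < `|n|)%N \/ (N < `|k|)%N -> f n k = 0) ->
  in_calA (sf N f).
Proof.
move=> hf i; rewrite size_map size_iota => hi.
rewrite (nth_map 0%N) ?size_iota //=.
by apply: (@fs_evc _ N) => k hk; apply: hf; right.
Qed.

Lemma lmul_sub s (g h : coef R) p k :
  lmul s (Defs.subc g h) p k = lmul s g p k - lmul s h p k.
Proof. by rewrite /lmul -sumrB; apply: eq_bigr => t _; rewrite /mon_l /Defs.subc mulrBr. Qed.

Lemma lmul1 n a (g : coef R) p k : lmul [:: (n, a)] g p k = mon_l n a g p k.
Proof. by rewrite /lmul big_seq1. Qed.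

Lemma modD D m beta : implements_derivation m beta D -> forall s g, in_calA s -> in_calD g ->
  forall p k, D (lmul s g) p k = mon_l m beta (lmul s g) p k + lmul s (Gof D m beta g) p k.
Proof.
move=> hD s g hs hg p k.
have := congr1 (fun F => F p k) (hD s hs g hg); rewrite /Defs.subc /= => e.
rewrite /Gof lmul_sub addrCA -e; ring.
Qed.

Lemma sum_one N (n0 : int) (F : int -> C) : (forall n, n != n0 -> F n = 0) ->
  (forall n, (N < `|n|)%N -> F n = 0) ->
  \sum_(i <- iota 0 (2 * N).+1) F (i%:Z - N%:Z) = F n0.
Proof.
move=> h1 h2; case: (leqP `|n0| N) => hn.
- have hi : (`|(n0 + N%:Z)%R|%N \in iota 0 (2 * N).+1) by rewrite mem_iota; lia.
  rewrite (bigD1_seq _ hi (iota_uniq _ _)) /= big1 ?addr0.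
  + congr F; lia.
  + move=> i hi'; apply: h1; apply: contraNneq hi' => e; apply/eqP; lia.
- rewrite h2 //; apply: big1 => i _.
  by case: (eqVneq (i%:Z - N%:Z) n0) => [->|ne]; [exact: h2 | exact: h1].
Qed.

Lemma lmul_sf N (f g : coef R) p k : lmul (sf N f) g p k =
  \sum_(i <- iota 0 (2 * N).+1) mon_l (i%:Z - N%:Z) (f (i%:Z - N%:Z)) g p k.
Proof. by rewrite /lmul big_map. Qed.

Lemma modD1 D m beta : implements_derivation m beta D -> forall n a g h,
  ev_const a -> in_calD g -> lmul [:: (n, a)] g = h ->
  forall p k, Gof D m beta h p k = mon_l n a (Gof D m beta g) p k.
Proof.
move=> hD n a g h ha hg e p k.
have := modD _ _ _ hD _ _ (calA1 n _ ha) hg p k; rewrite e lmul1 /Gof /Defs.subc => ->; ring.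
Qed.

Lemma good_unique m beta D : good_D m beta D -> exists alpha : int -> C,
  forall f, in_calD f -> D f = Defs.subc (mon_l m beta f) (mon_r f m alpha).
Proof.
case=> _ [hD hcov].
pose G g := Gof D m beta g.
exists (fun k => - G (Pj (k + m)) m k).
move=> f [N hf].
have Pj_calD j : in_calD (Pj j).
  exists `|j|%N => n k h; rewrite /Pj; case: ifP => // /andP[/eqP hn /eqP hk].
  exfalso; subst; lia.
have chi_calD : in_calD (chiN N).
  exists N => n k h; rewrite /chiN; case: ifP => // /andP[/eqP hn hk].
  exfalso; subst; lia.
have covP j p k : p != m -> G (Pj j) p k = 0.
  move=> hpm.
  have hUP phi : Uphi_inv phi (Pj j) = Pj j.
    apply/funext => n; apply/funext => k'; rewrite /Uphi_inv /Pj.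
    case: ifP => [/andP[/eqP -> _]|_]; last by rewrite mulr0.
    by rewrite mul0r oppr0 expi0 mul1r.
  have d0 : p - m != 0 by rewrite subr_eq0.
  have [h0 h2] := phi_ok d0.
  have := congr1 (fun F => F p k) (hcov _ h0 h2 (Pj j) (Pj_calD j)).
  rewrite hUP /Uphi /Defs.scalec /= => e.
  have ne := expi_ne _ (cos_d d0).
  have hDP : D (Pj j) p k = 0.
    apply/eqP; move: e => /eqP; rewrite -subr_eq0 -mulrBl mulf_eq0 subr_eq0.
    by rewrite (negbTE ne).
  rewrite /G /Gof /Defs.subc hDP /mon_l /Pj.
  by rewrite (negbTE d0) /= mulr0 subrr.
have e1 : lmul [:: (0, ind N)] (chiN N) = chiN N.
  apply/funext => n; apply/funext => k'; rewrite lmul1 /mon_l /chiN /ind.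
  rewrite !subr0; case: (n =P 0) => [->|_] /=; last by rewrite mulr0.
  by rewrite addr0; case: ifP; rewrite ?mulr1 ?mulr0.
have ev_ind : ev_const (ind N).
  by apply: (@fs_evc _ N) => k hk; rewrite /ind; case: ifP => //; lia.
have e2 j : (`|j| <= N)%N -> lmul [:: (0, delta j)] (chiN N) = Pj j.
  move=> hj; apply/funext => n; apply/funext => k'; rewrite lmul1 /mon_l /chiN /delta /Pj.
  rewrite !subr0; case: (n =P 0) => [->|_] /=; last by rewrite mulr0.
  rewrite addr0; case: (k' =P j) => [->|_]; last by rewrite mul0r.
  by rewrite hj mulr1.
have ev_delta j : ev_const (delta j).
  by apply: (@fs_evc _ `|j|) => k hk; rewrite /delta; case: (k =P j) => // e; lia.
have hG p k : G (chiN N) p k =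
    if (`|(k + p)%R| <= N)%N then G (Pj (k + p)) p k else 0.
  have g1 := modD1 _ _ _ hD _ _ _ _ ev_ind chi_calD e1 p k.
  case: ifP => hk.
    have g2 := modD1 _ _ _ hD _ _ _ _ (ev_delta (k + p)) chi_calD (e2 _ hk) p k.
    by rewrite /G g2 /mon_l !subr0 /delta eqxx mul1r.
  by rewrite /G g1 /mon_l !subr0 /ind hk mul0r.
have hG0 p k : p != m -> G (chiN N) p k = 0.
  by move=> hp; rewrite hG; case: ifP => // _; apply: covP.
have ef : lmul (sf N f) (chiN N) = f.
  apply/funext => p; apply/funext => k.
  rewrite lmul_sf (@sum_one N p (fun n => mon_l n (f n) (chiN N) p k)).
  - rewrite /mon_l /chiN subrr eqxx /=; have -> : k + p - p = k by ring.
    case: ifP => hk; first by rewrite mulr1.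
    by rewrite mulr0 hf //; right; lia.
  - by move=> n hn; rewrite /mon_l /chiN subr_eq0 eq_sym (negbTE hn) /= mulr0.
  - by move=> n hn; rewrite /mon_l hf ?mul0r //; left.
apply/funext => p; apply/funext => k.
have := modD _ _ _ hD _ _ (calA_sf _ _ hf) chi_calD p k; rewrite ef => ->.
rewrite /Defs.subc; congr (_ + _).
rewrite lmul_sf (@sum_one N (p - m) (fun n => mon_l n (f n) (G (chiN N)) p k)).
- rewrite /mon_l /mon_r.
  have -> : p - (p - m) = m by ring.
  have -> : k + p - (p - m) = k + m by ring.
  rewrite hG; case: ifP => hk; first by rewrite mulrN opprK.
  by rewrite hf ?mul0r ?oppr0 //; right; lia.
- move=> n hn; rewrite /mon_l hG0 ?mulr0 //.
  by apply: contraNneq hn => e; apply/eqP; rewrite -e; ring.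
- by move=> n hn; rewrite /mon_l hf ?mul0r //; left.
Qed.
End M.

Theorem mainTheorem16 (R : realType) :
  (* (i) invariant derivation d(a) = [beta(K), a] *)
  (forall beta : int -> R[i], conv_incr beta ->
     (exists D : coef R -> coef R, good_D 0 beta D) /\
     (forall D : coef R -> coef R, good_D 0 beta D ->
        exists alpha : int -> R[i], forall f : coef R, in_calD f ->
          D f = subc (mon_l 0 beta f) (mon_r f 0 alpha))) /\
  (* (ii) covariant derivation d(a) = [U beta(K), a] *)
  (forall beta : int -> R[i], conv_incr beta ->
     (exists D : coef R -> coef R, good_D 1 beta D) /\
     (forall D : coef R -> coef R, good_D 1 beta D ->
        exists alpha : int -> R[i], forall f : coef R, in_calD f ->
          D f = subc (mon_l 1 beta f) (mon_r f 1 alpha))).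
Proof.
split=> beta _; split.
- by exists (mon_l 0 beta); apply: good_exists.
- by move=> D hD; apply: good_unique.
- by exists (mon_l 1 beta); apply: good_exists.
- by move=> D hD; apply: good_unique.
Qed.
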